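(* Fix $\vartheta_1\in(0,\pi/2)$. The function $\Phi$ is increasing on $[\vartheta_1,\pi-\vartheta_1]$, and $\Phi(\pi-\vartheta_1)=\pi$.
   Context: For $\eta\in[\vartheta_1,\pi-\vartheta_1]$ set $\gamma(\eta)=\sqrt{1-\sin^2\vartheta_1/\sin^2\eta}$ and $\Phi(\eta)=-\eta\,\gamma(\eta)+\arccos\big(\cos\eta/\cos\vartheta_1\big)$ with $\arccos\in[0,\pi]$. *)

(* Defs.v *)
From Stdlib Require Import Reals.
Open Scope R_scope.

Definition gamma_ (th1 eta : R) : R :=
  sqrt (1 - (sin th1)^2 / (sin eta)^2).

Definition Phi (th1 eta : R) : R :=
  - eta * gamma_ th1 eta + acos (cos eta / cos th1).

(* Main.v *)
Require Import Defs.
From Stdlib Require Import Reals Lra.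
From Coquelicot Require Import Coquelicot.
Open Scope R_scope.
Lemma cont_of_derive f x l : is_derive f x l -> continuity_pt f x.
Proof. intros H; apply derivable_continuous_pt; exists l; apply is_derive_Reals; exact H. Qed.
Lemma h_nonneg x : 0 <= x <= PI -> 0 <= sin x - x * cos x.
Proof.
intros Hx.
destruct (MVT_gen (fun t => sin t - t * cos t) 0 x (fun t => t * sin t)) as [c [Hc Heq]].
- intros t _. auto_derive; auto. ring.
- intros t _. eapply cont_of_derive. auto_derive; auto.
- rewrite Rmin_left in Hc by lra. rewrite Rmax_right in Hc by lra.
  rewrite sin_0, cos_0 in Heq.
  assert (0 <= sin c) by (apply sin_ge_0; lra).
  assert (0 <= c * sin c * (x - 0)) by (apply Rmult_le_pos; [apply Rmult_le_pos|]; lra).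
  lra.
Qed.

Lemma h_pos x : 0 < x < PI -> x * cos x < sin x.
Proof.
intros Hx.
assert (H0 := h_nonneg (x/2) ltac:(lra)).
destruct (MVT_gen (fun t => sin t - t * cos t) (x/2) x (fun t => t * sin t)) as [c [Hc Heq]].
- intros t _. auto_derive; auto. ring.
- intros t _. eapply cont_of_derive. auto_derive; auto.
- rewrite Rmin_left in Hc by lra. rewrite Rmax_right in Hc by lra.
  assert (0 < sin c) by (apply sin_gt_0; lra).
  assert (0 < c * sin c * (x - x/2)) by (apply Rmult_lt_0_compat; [apply Rmult_lt_0_compat|]; lra).
  lra.
Qed.

Lemma acos_eq0 x : 1 <= x -> acos x = 0.
Proof. intros; unfold acos; repeat case Rle_dec; lra. Qed.

Lemma acos_cont1 : continuity_pt acos 1.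
Proof.
unfold continuity_pt, continue_in, limit1_in, limit_in; simpl; unfold R_dist.
intros eps Heps.
set (e := Rmin eps (PI/2)).
assert (He : 0 < e) by (unfold e; apply Rmin_glb_lt; [lra | pose proof PI_RGT_0; lra]).
assert (He2 : e <= PI/2) by apply Rmin_r.
assert (He3 : e <= eps) by apply Rmin_l.
assert (Hce : cos e < 1) by (rewrite <- cos_0; apply cos_decreasing_1; pose proof PI_RGT_0; lra).
exists (1 - cos e); split; [lra|].
intros x [_ Hx]. rewrite acos_1, Rminus_0_r.
destruct (Rle_dec 1 x) as [H1|H1].
- rewrite acos_eq0 by lra. rewrite Rabs_R0; lra.
- apply Rnot_le_lt in H1. apply Rabs_def2 in Hx.
  pose proof (acos_bound x).
  rewrite Rabs_pos_eq by lra.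
  destruct (Rlt_le_dec (acos x) e) as [Hl|Hl]; [lra|].
  exfalso.
  assert (Hcc : cos (acos x) <= cos e).
  { destruct (Req_dec (acos x) e) as [E|E]; [rewrite E; lra|].
    left; apply cos_decreasing_1; pose proof PI_RGT_0; lra. }
  assert (0 <= cos e) by (apply cos_ge_0; lra). rewrite cos_acos in Hcc by lra. lra.
Qed.

Lemma acos_cont u : -1 <= u <= 1 -> continuous acos u.
Proof.
intros Hu. apply continuity_pt_filterlim.
destruct (Req_dec u 1) as [E|E]; [subst; apply acos_cont1|].
destruct (Req_dec u (-1)) as [E2|E2].
- subst. apply continuity_pt_filterlim.
  apply continuous_ext with (f := fun x => PI - acos (- x)).
  { intros x. change (PI - acos (- x) = acos x). rewrite acos_opp. ring. }
  change (continuous (fun x : R => plus PI (opp (acos (opp x)))) (-1)).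
  apply (@continuous_plus R_UniformSpace R_AbsRing R_NormedModule). apply continuous_const.
  apply (@continuous_opp R_UniformSpace R_AbsRing R_NormedModule).
  apply (@continuous_comp R_UniformSpace R_UniformSpace R_UniformSpace (fun x : R => opp x)).
  apply (@continuous_opp R_UniformSpace R_AbsRing R_NormedModule), continuous_id.
  apply continuity_pt_filterlim. replace (opp (-1)) with 1. apply acos_cont1.
  compute; ring.
- apply derivable_continuous_pt. apply derivable_pt_acos. lra.
Qed.

Lemma sin_strict th1 e : 0 < th1 < PI/2 -> th1 < e < PI - th1 -> sin th1 < sin e.
Proof.
intros H He.
destruct (Rle_dec e (PI/2)) as [E|E].
- apply sin_increasing_1; lra.
- rewrite <- (sin_PI_x e). apply sin_increasing_1; lra.
Qed.

Lemma sin_weak th1 e : 0 < th1 < PI/2 -> th1 <= e <= PI - th1 -> sin th1 <= sin e.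
Proof.
intros H He.
destruct (Req_dec e th1) as [E|E]; [subst; lra|].
destruct (Req_dec e (PI - th1)) as [E2|E2]; [subst; rewrite sin_PI_x; lra|].
left; apply sin_strict; lra.
Qed.

Lemma acos_deriv u : -1 < u < 1 -> is_derive acos u (-1 / sqrt (1 - u²)).
Proof.
intros Hu. apply is_derive_Reals.
apply (derive_pt_eq_1 _ _ _ (derivable_pt_acos u Hu)).
apply derive_pt_acos.
Qed.

Theorem corollary5p11 (th1 : R) (Hth1 : 0 < th1 < PI / 2) :
  (forall x y : R, th1 <= x -> x < y -> y <= PI - th1 ->
     Phi th1 x < Phi th1 y)
  /\ Phi th1 (PI - th1) = PI.
Proof.
assert (HS : 0 < (sin th1)) by (apply sin_gt_0; lra).
assert (HC : 0 < (cos th1)) by (apply cos_gt_0; lra).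
assert (HSC : (sin th1)^2 + (cos th1)^2 = 1) by (pose proof (sin2_cos2 th1); unfold Rsqr in *; lra).
split.
2:{ unfold Phi, gamma_. rewrite sin_PI_x, Rtrigo_facts.cos_pi_minus.
    replace (1 - (sin th1)^2/(sin th1)^2) with 0 by (field; lra). rewrite sqrt_0.
    replace (- (cos th1) / (cos th1)) with (- (1)) by (field; lra). rewrite acos_opp, acos_1. ring. }
intros x y Hx Hxy Hy.
set (D := fun t => - sqrt (1 - (sin th1)^2/(sin t)^2)
   + - t * (2 * (sin th1)^2 * cos t / (sin t)^3) / (2 * sqrt (1 - (sin th1)^2/(sin t)^2))
   + (- sin t / (cos th1)) * (-1 / sqrt (1 - (cos t / (cos th1))²))).
set (df := fun t => if Rlt_dec th1 t then if Rlt_dec t (PI - th1) then D t else 1 else 1).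
assert (Dpos : forall t, th1 < t < PI - th1 -> 0 < D t).
{ intros t Ht.
  assert (Hst : (sin th1) < sin t) by (apply sin_strict; lra).
  assert (Hct : sin t ^ 2 + cos t ^ 2 = 1) by (pose proof (sin2_cos2 t); unfold Rsqr in *; lra).
  set (G := sqrt (1 - (sin th1)^2/(sin t)^2)).
  assert (Hg : 0 < 1 - (sin th1)^2/(sin t)^2).
  { apply Rlt_Rminus. apply Rmult_lt_reg_r with ((sin t)^2). nra.
    field_simplify; nra. }
  assert (HG : 0 < G) by (apply sqrt_lt_R0; exact Hg).
  assert (HGG : G * G = 1 - (sin th1)^2/(sin t)^2) by (apply sqrt_sqrt; lra).
  assert (E : 1 - (cos t / (cos th1))² = Rsqr (G * sin t / (cos th1))).
  { unfold Rsqr.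
    replace (G * sin t / (cos th1) * (G * sin t / (cos th1))) with ((G*G) * (sin t * sin t) / ((cos th1)*(cos th1))) by (field; lra).
    rewrite HGG.
    replace (cos t / (cos th1) * (cos t / (cos th1))) with ((cos t * cos t)/((cos th1)*(cos th1))) by (field; lra).
    replace (cos t * cos t) with (1 - sin t * sin t) by nra.
    replace ((sin th1)^2) with (1 - (cos th1)*(cos th1)) by lra. field. split; lra. }
  assert (Hsq : sqrt (1 - (cos t / (cos th1))²) = G * sin t / (cos th1)).
  { rewrite E. apply sqrt_Rsqr. apply Rmult_le_pos; [apply Rmult_le_pos|]; [lra|lra|].
    left; apply Rinv_0_lt_compat; lra. }
  assert (HDt : D t = (sin th1)^2 * (sin t - t * cos t) / ((sin t)^3 * G)).
  { unfold D. fold G. rewrite Hsq.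
    replace (- G + - t * (2 * (sin th1) ^ 2 * cos t / sin t ^ 3) / (2 * G) +
      - sin t / (cos th1) * (-1 / (G * sin t / (cos th1)))) with
      (((sin t)^3 * (1 - G*G) - t * (sin th1)^2 * cos t) / ((sin t)^3 * G)) by (field; lra).
    rewrite HGG. field. lra. }
  rewrite HDt.
  assert (0 < sin t - t * cos t) by (pose proof (h_pos t ltac:(lra)); lra).
  apply Rdiv_lt_0_compat. apply Rmult_lt_0_compat; [apply pow_lt|]; lra.
  apply Rmult_lt_0_compat; [|lra]. apply pow_lt; lra. }
destruct (MVT_gen (Phi th1) x y df) as [c [Hc Heq]].
- intros t Ht. rewrite Rmin_left in Ht by lra. rewrite Rmax_right in Ht by lra.
  unfold df. destruct (Rlt_dec th1 t) as [_|N]; [|lra].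
  destruct (Rlt_dec t (PI - th1)) as [_|N]; [|lra].
  assert (Hst : sin th1 < sin t) by (apply sin_strict; lra).
  assert (Hct : sin t ^ 2 + cos t ^ 2 = 1) by (pose proof (sin2_cos2 t); unfold Rsqr in *; lra).
  assert (Hg : 0 < 1 - (sin th1)^2/(sin t)^2).
  { apply Rlt_Rminus. apply Rmult_lt_reg_r with ((sin t)^2). nra.
    field_simplify; nra. }
  assert (Hc2 : cos t * cos t < cos th1 * cos th1) by nra.
  assert (Hc3 : - cos th1 < cos t < cos th1) by (split; nra).
  assert (Hu: -1 < cos t / cos th1 < 1).
  { split; apply (Rmult_lt_reg_r (cos th1)); try lra; unfold Rdiv;
    rewrite Rmult_assoc, Rinv_l; lra. }
  assert (Hs0 : sin t <> 0) by lra.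
  assert (Hs1 : sin t * (sin t * 1) <> 0) by (rewrite Rmult_1_r; apply Rmult_integral_contrapositive; auto).
  unfold Phi, gamma_, D.
  apply (@is_derive_plus R_AbsRing R_NormedModule (fun e => - e * sqrt (1 - sin th1 ^ 2 / sin e ^ 2)) (fun e => acos (cos e / cos th1))).
  + auto_derive.
    * repeat split; try exact Hs1. replace (1 + - (sin th1 * (sin th1 * 1) * / (sin t * (sin t * 1)))) with (1 - sin th1 ^ 2 / sin t ^ 2) by (field; auto). lra.
    * replace (1 + - (sin th1 * (sin th1 * 1) * / (sin t * (sin t * 1)))) with (1 - sin th1 ^ 2 / sin t ^ 2) by (field; auto).
      assert (0 < sqrt (1 - sin th1 ^ 2 / sin t ^ 2)) by (apply sqrt_lt_R0; lra).
      field. lra.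
  + apply (is_derive_comp acos (fun e => cos e / cos th1)).
    * apply acos_deriv. exact Hu.
    * auto_derive; [lra|]. field. lra.
- intros t Ht. rewrite Rmin_left in Ht by lra. rewrite Rmax_right in Ht by lra.
  assert (Hst : sin th1 <= sin t) by (apply sin_weak; lra).
  assert (Hct : sin t ^ 2 + cos t ^ 2 = 1) by (pose proof (sin2_cos2 t); unfold Rsqr in *; lra).
  assert (Hs0 : sin t <> 0) by lra.
  assert (Hs1 : sin t * (sin t * 1) <> 0) by (rewrite Rmult_1_r; apply Rmult_integral_contrapositive; auto).
  assert (Hc2 : cos t * cos t <= cos th1 * cos th1) by nra.
  assert (Hc3 : - cos th1 <= cos t <= cos th1) by (split; nra).
  assert (Hu: -1 <= cos t / cos th1 <= 1).
  { split; apply (Rmult_le_reg_r (cos th1)); try lra; unfold Rdiv;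
    rewrite Rmult_assoc, Rinv_l; lra. }
  apply continuity_pt_filterlim. unfold Phi, gamma_.
  change (continuous (fun e : R => plus (mult (opp e) (sqrt (1 - sin th1^2 / sin e^2))) (acos (cos e / cos th1))) t).
  apply (@continuous_plus R_UniformSpace R_AbsRing R_NormedModule).
  + apply (@continuous_mult R_UniformSpace R_AbsRing).
    * apply (@continuous_opp R_UniformSpace R_AbsRing R_NormedModule), continuous_id.
    * apply continuous_sqrt_comp. apply continuity_pt_filterlim. eapply cont_of_derive.
      auto_derive; repeat split; auto.
  + apply (@continuous_comp R_UniformSpace R_UniformSpace R_UniformSpace (fun e => cos e / cos th1) acos).
    * apply continuity_pt_filterlim. eapply cont_of_derive. auto_derive; try lra; try reflexivity.
    * apply acos_cont. exact Hu.
- rewrite Rmin_left in Hc by lra. rewrite Rmax_right in Hc by lra.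
  assert (0 < df c).
  { unfold df. destruct (Rlt_dec th1 c); [|lra]. destruct (Rlt_dec c (PI - th1)); [|lra].
    apply Dpos; lra. }
  assert (0 < df c * (y - x)) by (apply Rmult_lt_0_compat; lra).
  lra.
Qed.
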